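(* Let $m\ge1$ and let $1\le K\le N$ be integers with $K/N\ge\frac12+\frac1N$. Consider any received word (over a binary erasure channel, each of the $N$ symbols consisting of $m$ bits) in which more than $2(N-K+1)$ symbols contain at least one erased bit. Then under the proportional multiplicity assignment with any $M>0$, the ASD sufficient condition $S\ge\sqrt{2(K-1)C}$ is not satisfied.
   Context: Setting: a Reed–Solomon code of length $N$ and dimension $K$ over $GF(2^m)$ whose symbols are sent as $m$ bits each over a binary erasure channel. If the $j$-th received symbol has $b_j$ erased bits, it is consistent with $2^{b_j}$ candidate symbols. The proportional multiplicity assignment gives each of these candidates multiplicity $M2^{-b_j}$; the score is $S=\sum_j M2^{-b_j}$ and the (approximate) cost is $C=\frac12\sum_j 2^{b_j}(M2^{-b_j})^2$. *)

(* Defs.v *)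
From mathcomp Require Import all_boot all_order all_algebra.
Set Implicit Arguments. Unset Strict Implicit. Unset Printing Implicit Defensive.
Import Order.TTheory GRing.Theory Num.Theory.
Local Open Scope ring_scope.

(* Erasure pattern: b j = number of erased bits of the j-th received symbol
   (0 <= b j <= m).  Symbol j is consistent with 2^(b j) candidates. *)

Definition prop_mult (R : realFieldType) (M : R) (b : nat) : R := M * 2 ^- b.

Definition n_cand (R : realFieldType) (b : nat) : R := 2 ^+ b.

Definition score (R : realFieldType) (N : nat) (M : R) (b : 'I_N -> nat) : R :=
  \sum_(j < N) prop_mult M (b j).

Definition cost (R : realFieldType) (N : nat) (M : R) (b : 'I_N -> nat) : R :=
  2^-1 * \sum_(j < N) n_cand R (b j) * (prop_mult M (b j)) ^+ 2.

Definition asd_condition (R : rcfType) (N K : nat) (M : R) (b : 'I_N -> nat) : Prop :=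
  score M b >= Num.sqrt (2 * (K%:R - 1) * cost M b).

(* Main.v *)
Require Import Defs.
From mathcomp Require Import all_boot all_order all_algebra.
From mathcomp Require Import ring lra.
Import Order.TTheory GRing.Theory Num.Theory.
Local Open Scope ring_scope.

Theorem corollary1 (R : rcfType) (m N K : nat) (b : 'I_N -> nat) (M : R) :
  (1 <= m)%N -> (1 <= K)%N -> (K <= N)%N ->
  K%:R / N%:R >= 2^-1 + N%:R^-1 :> R ->
  (forall j, (b j <= m)%N) ->
  (#|[set j | (1 <= b j)%N]| > 2 * (N - K + 1))%N ->
  0 < M ->
  ~ @asd_condition R N K M b.
Proof.
move=> _ K1 KN _ _ He M0; rewrite /asd_condition.
set X := \sum_(j < N) (2 ^- b j : R).
have hS : score M b = M * X by rewrite /score mulr_sumr.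
have hx j : 2 ^+ b j * (2 ^- b j : R) = 1 by rewrite mulfV // expf_neq0 // pnatr_eq0.
have hC : cost M b = 2^-1 * M ^+ 2 * X.
  rewrite /cost -[in RHS]mulrA /X [in RHS]mulr_sumr; congr (_ * _); apply: eq_bigr => j _.
  rewrite /n_cand /prop_mult; have := hx j; set y := (2:R) ^+ b j => hy.
  transitivity (M^+2 * y^-1 * (y * y^-1)); first ring.
  by rewrite hy mulr1.
have xle j : (2 ^- b j : R) <= 1 - (if (1 <= b j)%N then 1 else 0) / 2.
  rewrite -exprVn; case: (b j) => [|k] /=; first by rewrite expr0; lra.
  rewrite exprS mul1r.
  have h1 : (2^-1 : R) ^+ k <= 1 by apply: exprn_ile1; lra.
  have h2 : (0 : R) <= 2^-1 by lra.
  nra.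
have xgt j : (0 : R) < 2 ^- b j by rewrite invr_gt0 exprn_gt0.
have N0 : (0 < N)%N by apply: leq_trans KN.
have Xpos : 0 < X.
  rewrite /X (bigD1 (Ordinal N0)) //=.
  have := xgt (Ordinal N0); have : 0 <= \sum_(i < N | i != Ordinal N0) (2 ^- b i : R).
    by apply: sumr_ge0 => i _; apply: ltW.
  lra.
have Xle : X <= N%:R - #|[set j | (1 <= b j)%N]|%:R / 2.
  apply: (le_trans (ler_sum _ (fun j _ => xle j))).
  rewrite sumrB sumr_const card_ord -mulr_suml -big_mkcond /=.
  rewrite (eq_bigl (fun j => j \in [set j | (1 <= b j)%N])); last by move=> j; rewrite inE.
  by rewrite sumr_const.
have He' : ((2 * (N - K + 1)).+1)%:R <= #|[set j | (1 <= b j)%N]|%:R :> R by rewrite ler_nat.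
rewrite -addn1 natrD natrM natrD natrB // in He'.
have XK : X < K%:R - 1 by lra.
rewrite hS hC => H.
set A := 2 * (K%:R - 1) * (2^-1 * M ^+ 2 * X) in H.
have A0 : 0 <= A.
  rewrite /A !mulr_ge0 ?subr_ge0 ?ler1n ?sqr_ge0 ?ltW ?invr_ge0 //; lra.
have := sqr_sqrtr A0; have := sqrtr_ge0 A.
set s := Num.sqrt A => s0 s2.
have HA : A <= (M * X) ^+ 2 by rewrite -s2 !expr2; apply: ler_pM.
rewrite /A in HA.
have M2 : 0 < M ^+ 2 by rewrite exprn_gt0.
have E : (M * X) ^+ 2 - 2 * (K%:R - 1) * (2^-1 * M ^+ 2 * X) = - (M ^+ 2 * X * (K%:R - 1 - X)).
  by field.
have P : 0 < M ^+ 2 * X * (K%:R - 1 - X) by rewrite !mulr_gt0 // subr_gt0.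
move: HA; rewrite -subr_ge0 E oppr_ge0 => HA.
by move: (lt_le_trans P HA); rewrite ltxx.
Qed.
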